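(* Let $T(n)=(3n+1)/2^{v_2(3n+1)}$ be the Syracuse map and, for odd $n$, $L(n)=v_2(n+1)-1$. The natural density, among the odd positive integers, of those odd $n$ with $T^{L(n)+1}(n)<n$ equals $$P_{1\mathrm{cyc}}=\sum_{\ell\ge 0}2^{-(\ell+1)}\cdot 2^{-\lfloor(\log_2 3-1)(\ell+1)\rfloor}=0.71372549767589\ldots$$
   Context: $v_2$ is the $2$-adic valuation; $T^j$ the $j$-th iterate. *)

(* Defs.v *)
From Stdlib Require Import Reals Arith List.
Open Scope R_scope.

(* 2-adic valuation on nat (fuel-based; the fuel n suffices since v2 n <= n).
   Convention v2 0 = 0 (never used at 0 below). *)
Fixpoint v2_aux (fuel n : nat) : nat :=
  match fuel with
  | O => O
  | S f => if Nat.eqb n 0 then O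
           else if Nat.even n then S (v2_aux f (Nat.div n 2)) else O
  end.
Definition v2 (n : nat) : nat := v2_aux n n.

Definition syr (n : nat) : nat := Nat.div (3 * n + 1) (2 ^ v2 (3 * n + 1)).

Definition Lfun (n : nat) : nat := v2 (n + 1) - 1.

Definition good (n : nat) : bool := Nat.ltb (Nat.iter (Lfun n + 1) syr n) n.

Definition count_good (N : nat) : nat :=
  length (filter (fun k => good (2 * k + 1)) (seq 0 N)).

Definition dens (N : nat) : R := INR (count_good N) / INR N.

Definition log2_3 : R := ln 3 / ln 2.

Definition P1cyc_term (l : nat) : R :=
  (/ 2) ^ (l + 1) * powerRZ 2 (- Int_part ((log2_3 - 1) * INR (l + 1))).

(* Main.v *)
Require Import Defs.
From Stdlib Require Import Reals Arith List Lia Lra NArith.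
Open Scope nat_scope.


Lemma pow2_pos a : 0 < 2 ^ a.
Proof. apply Nat.neq_0_lt_0. apply Nat.pow_nonzero. lia. Qed.

Lemma v2_aux_S f n : v2_aux (S f) n =
  if Nat.eqb n 0 then O else if Nat.even n then S (v2_aux f (Nat.div n 2)) else O.
Proof. reflexivity. Qed.

Lemma v2_aux_pow : forall f a c, a < f -> v2_aux f (2^a * (2*c+1)) = a.
Proof.
  induction f as [|f IH]; intros a c H; [lia|].
  rewrite v2_aux_S.
  assert (Hnz : Nat.eqb (2^a*(2*c+1)) 0 = false).
  { apply Nat.eqb_neq. pose proof (pow2_pos a). nia. }
  rewrite Hnz.
  destruct a as [|a].
  - simpl Nat.pow. replace (1 * (2*c+1)) with (1 + 2*c) by lia.
    rewrite Nat.even_add_mul_2. reflexivity.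
  - replace (2 ^ S a * (2 * c + 1)) with (0 + 2 * (2^a*(2*c+1))) by (rewrite Nat.pow_succ_r'; lia).
    rewrite Nat.even_add_mul_2. simpl Nat.even. cbv iota.
    rewrite Nat.add_0_l, Nat.mul_comm, Nat.div_mul by lia.
    rewrite IH by lia. reflexivity.
Qed.

Lemma v2_pow a c : v2 (2^a * (2*c+1)) = a.
Proof. unfold v2. apply v2_aux_pow. pose proof (Nat.pow_gt_lin_r 2 a). nia. Qed.

Lemma decomp : forall n, 1 <= n -> exists a c, n = 2^a * (2*c+1).
Proof.
  intro n. induction n as [n IH] using (well_founded_induction lt_wf). intros Hn.
  destruct (Nat.Even_or_Odd n) as [[h Hh]|[h Hh]].
  - destruct (IH h) as [a [c Hac]]; try lia.
    exists (S a), c. rewrite Nat.pow_succ_r'. lia.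
  - exists 0, h. simpl. lia.
Qed.

Lemma decomp_unique a c a' c' : 2^a*(2*c+1) = 2^a'*(2*c'+1) -> a = a' /\ c = c'.
Proof.
  intro H. assert (Ha : a = a') by (rewrite <- (v2_pow a c), <- (v2_pow a' c'); congruence).
  subst a'. split; auto. apply Nat.mul_cancel_l in H; [lia|]. pose proof (pow2_pos a). lia.
Qed.

Lemma syr_spec y a c : 3*y+1 = 2^a*(2*c+1) -> syr y = 2*c+1.
Proof.
  intro H. unfold syr. rewrite H, v2_pow, Nat.mul_comm, Nat.div_mul; auto.
  pose proof (pow2_pos a). lia.
Qed.

Lemma iter_formula i m : 1 <= m -> forall p, p <= i ->
  Nat.iter p syr (2^(S i) * m - 1) = 3^p * 2^(S i - p) * m - 1.
Proof.
  intros Hm p. induction p as [|p IH]; intros Hp.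
  - simpl Nat.iter. rewrite Nat.sub_0_r, Nat.pow_0_r, Nat.mul_1_l. reflexivity.
  - rewrite Nat.iter_succ, IH by lia.
    set (q := i - S p).
    assert (E1 : S i - p = S (S q)) by (unfold q; lia).
    assert (E2 : S i - S p = S q) by (unfold q; lia).
    rewrite E1, E2.
    rewrite !Nat.pow_succ_r'.
    set (A := 3^p * 2^q * m).
    assert (HA : 1 <= A) by (unfold A; pose proof (pow2_pos q);
       assert (0 < 3^p) by (apply Nat.neq_0_lt_0, Nat.pow_nonzero; lia); nia).
    replace (3 ^ p * (2 * (2 * 2 ^ q)) * m - 1) with (4*A - 1) by (unfold A; nia).
    replace (3 * 3 ^ p * (2 * 2 ^ q) * m - 1) with (2 * (3*A-1) + 1) by (unfold A; nia).
    apply (syr_spec _ 1). simpl. lia.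
Qed.

Lemma good_char k i d w c :
  k + 1 = 2^i * (2*d+1) -> 3^(S i) * (2*d+1) - 1 = 2^w * (2*c+1) ->
  good (2*k+1) = Nat.ltb (2*c+1) (2*k+1).
Proof.
  intros Hk Hw. unfold good.
  assert (HL : Lfun (2*k+1) = i).
  { unfold Lfun. replace (2*k+1+1) with (2^(S i)*(2*d+1)) by (rewrite Nat.pow_succ_r'; lia).
    rewrite v2_pow. lia. }
  rewrite HL, Nat.add_1_r, Nat.iter_succ.
  assert (Hn : 2*k+1 = 2^(S i) * (2*d+1) - 1) by (rewrite Nat.pow_succ_r'; lia).
  rewrite Hn at 1.
  rewrite iter_formula by lia.
  replace (S i - i) with 1 by lia.
  f_equal. apply (syr_spec _ (S w)).
  rewrite (Nat.pow_succ_r' 2 w), <- (Nat.mul_assoc 2 (2^w)), <- Hw. rewrite Nat.pow_succ_r'.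
  assert (0 < 3^i) by (apply Nat.neq_0_lt_0, Nat.pow_nonzero; lia).
  rewrite (Nat.pow_succ_r' 3 i). set (A := 3^i). rewrite Nat.pow_0_r. nia.
Qed.


Definition E (j : nat) : nat := Nat.log2 (3 ^ j).
Definition bb (j : nat) : nat := S (E j) - j.
Definition uu (j : nat) : nat := (3 ^ j) ^ (2 ^ bb j - 1).
Definition rho (j : nat) : nat := uu j mod 2 ^ bb j.
Definition sig (j : nat) : nat := 2 ^ (j - 1) * rho j - 1.
Definition Ej (j k : nat) : bool := Nat.eqb (k mod 2 ^ E j) (sig j).

Lemma pow3_pos j : 0 < 3 ^ j.
Proof. apply Nat.neq_0_lt_0, Nat.pow_nonzero; lia. Qed.

Lemma E_spec j : 2 ^ E j <= 3 ^ j < 2 ^ S (E j).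
Proof. apply Nat.log2_spec, pow3_pos. Qed.

Lemma E_ge j : j <= E j.
Proof. apply Nat.log2_le_pow2. apply pow3_pos. apply Nat.pow_le_mono_l. lia. Qed.

Lemma pow3_odd j : exists d, 3 ^ j = 2 * d + 1.
Proof. induction j as [|j [d Hd]]. exists 0; reflexivity.
  exists (3*d+1). rewrite Nat.pow_succ_r', Hd. lia. Qed.

Lemma odd_pow2 x b : (exists d, x = 2*d+1) -> exists q, x ^ (2 ^ b) = 1 + 2 ^ (S b) * q.
Proof.
  intros [d Hd]. induction b as [|b [q Hq]].
  - exists d. simpl. lia.
  - exists (q + 2^b*q*q). replace (2 ^ S b) with (2^b * 2) by (rewrite Nat.pow_succ_r'; ring).
    rewrite Nat.pow_mul_r, Hq. rewrite !Nat.pow_succ_r'. rewrite Nat.pow_0_r. ring.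
Qed.

Lemma bb_ge1 j : 1 <= bb j.
Proof. unfold bb. pose proof (E_ge j). lia. Qed.

Lemma E_split j : 1 <= j -> 2 ^ E j = 2 ^ (j - 1) * 2 ^ bb j.
Proof. intro. rewrite <- Nat.pow_add_r. f_equal. unfold bb. pose proof (E_ge j). lia. Qed.

Lemma uu_inv j : exists c, 3 ^ j * uu j = 1 + 2 ^ bb j * c.
Proof.
  destruct (odd_pow2 (3^j) (bb j) (pow3_odd j)) as [q Hq].
  exists (2*q). unfold uu. rewrite <- Nat.pow_succ_r.
  replace (S (2 ^ bb j - 1)) with (2 ^ bb j) by (pose proof (pow2_pos (bb j)); lia).
  rewrite Hq, Nat.pow_succ_r'. ring. lia.
Qed.

Lemma uu_odd j : exists d, uu j = 2 * d + 1.
Proof.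
  unfold uu. destruct (pow3_odd j) as [d Hd]. rewrite Hd. generalize (2 ^ bb j - 1). intro n.
  induction n as [|n [e He]]. exists 0; reflexivity.
  rewrite Nat.pow_succ_r', He. exists (2*d*e + d + e). ring.
Qed.

Lemma rho_odd j : exists f, rho j = 2 * f + 1.
Proof.
  destruct (uu_odd j) as [e He]. unfold rho.
  pose proof (Nat.div_mod (uu j) (2 ^ bb j) (Nat.pow_nonzero 2 _ ltac:(lia))) as Hdm.
  assert (HB : 2 ^ bb j = 2 * 2 ^ (bb j - 1)).
  { rewrite <- Nat.pow_succ_r'. f_equal. pose proof (bb_ge1 j); lia. }
  set (r := uu j mod 2 ^ bb j) in *. set (Q := uu j / 2 ^ bb j) in *.
  rewrite HB in Hdm. rewrite He in Hdm.
  destruct (Nat.Even_or_Odd r) as [[f Hf]|[f Hf]].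
  - exfalso. rewrite Hf in Hdm.
    set (Z := 2 ^ (bb j - 1) * Q) in Hdm. 
    rewrite <- Nat.mul_assoc in Hdm. fold Z in Hdm. lia.
  - exists f. exact Hf.
Qed.

Lemma rho_lt j : rho j < 2 ^ bb j.
Proof. unfold rho. apply Nat.mod_upper_bound. apply Nat.pow_nonzero; lia. Qed.

Lemma inv_char x u B c m : 0 < B -> x * u = 1 + B * c -> 1 <= x * m ->
  (Nat.divide B (x * m - 1) <-> m mod B = u mod B).
Proof.
  intros HB Hu Hxm. split.
  - intros [d Hd]. assert (Hxm' : x * m = 1 + d * B) by lia.
    assert (Heq : m + (m * c) * B = u + (u * d) * B).
    { transitivity (m * (x * u)). rewrite Hu. ring. transitivity (u * (x * m)). ring. rewrite Hxm'. ring. }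
    rewrite <- (Nat.Div0.mod_add m (m*c) B), <- (Nat.Div0.mod_add u (u*d) B). congruence.
  - intros Hmod.
    pose proof (Nat.div_mod m B ltac:(lia)) as Hm. pose proof (Nat.div_mod u B ltac:(lia)) as Hu'.
    rewrite Hmod in Hm.
    set (r := u mod B) in *. set (a := m / B) in *. set (a' := u / B) in *.
    assert (Heq : x * m + x * B * a' = x * B * a + 1 + B * c).
    { rewrite Hm. replace (x * (B*a + r) + x*B*a') with (x*B*a + x*(B*a' + r)) by ring.
      rewrite <- Hu'. rewrite Hu. ring. }
    replace (x * m - 1) with ((B * (x * a) + B * c) - B * (x * a')) by nia.
    apply Nat.divide_sub_r; [apply Nat.divide_add_r|]; apply Nat.divide_factor_l.
Qed.


Lemma sig_lt j : 1 <= j -> sig j < 2 ^ E j.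
Proof.
  intro Hj. rewrite E_split by auto. unfold sig. pose proof (rho_lt j).
  pose proof (pow2_pos (j-1)). nia.
Qed.

Lemma Ej_char j k i d : 1 <= j -> k + 1 = 2^i * (2*d+1) ->
  (Ej j k = true <-> i = j - 1 /\ Nat.divide (2 ^ bb j) (3^j * (2*d+1) - 1)).
Proof.
  intros Hj Hk. unfold Ej. rewrite Nat.eqb_eq.
  destruct (uu_inv j) as [c Hc]. destruct (rho_odd j) as [f Hf].
  pose proof (rho_lt j) as Hrl.
  assert (HB : 2 ^ bb j = 2 * 2 ^ (bb j - 1)).
  { rewrite <- Nat.pow_succ_r'. f_equal. pose proof (bb_ge1 j); lia. }
  pose proof (pow3_pos j) as H3.
  assert (Hinv := inv_char (3^j) (uu j) (2^bb j) c (2*d+1) (pow2_pos _) Hc ltac:(nia)).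
  fold (rho j) in Hinv.
  pose proof (E_split j Hj) as Hq.
  pose proof (sig_lt j Hj) as Hsl.
  pose proof (pow2_pos (j-1)) as HP.
  set (P := 2 ^ (j-1)) in *. set (B := 2 ^ bb j) in *. set (B' := 2 ^ (bb j - 1)) in *.
  assert (Hsig : sig j + 1 = P * rho j) by (unfold sig; fold P; nia).
  split.
  - intro Hmod.
    pose proof (Nat.div_mod k (2 ^ E j) (Nat.pow_nonzero 2 _ ltac:(lia))) as Hdm.
    rewrite Hmod in Hdm. set (z := k / 2 ^ E j) in *. rewrite Hq in Hdm.
    assert (Hk2 : 2^i * (2*d+1) = 2^(j-1) * (2 * (B' * z + f) + 1)).
    { fold P. rewrite <- Hk. rewrite Hdm. rewrite HB in *. nia. }
    apply decomp_unique in Hk2. destruct Hk2 as [Hi Hd]. split; [exact Hi|].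
    apply Hinv. rewrite Hd. 
    replace (2 * (B' * z + f) + 1) with (rho j + z * B) by (rewrite HB in *; nia).
    rewrite Nat.Div0.mod_add. apply Nat.mod_small. exact Hrl.
  - intros [Hi Hdiv]. apply Hinv in Hdiv.
    pose proof (Nat.div_mod (2*d+1) B ltac:(lia)) as Hm. rewrite Hdiv in Hm.
    set (a := (2*d+1) / B) in *.
    symmetry. apply (Nat.mod_unique _ _ a); [exact Hsl|].
    rewrite Hq. subst i. fold P in Hk. rewrite Hm in Hk. nia.
Qed.


Lemma w_ge_b b w c : Nat.divide (2^b) (2^w*(2*c+1)) -> b <= w.
Proof.
  intro H. destruct (le_lt_dec b w) as [|Hlt]; auto. exfalso.
  assert (H2 : Nat.divide (2^w * 2) (2^w*(2*c+1))).
  { apply Nat.divide_trans with (2^b); auto.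
    replace b with ((w + 1) + (b - (w+1))) by lia. rewrite Nat.pow_add_r, Nat.pow_add_r.
    apply Nat.divide_factor_l. }
  apply Nat.mul_divide_cancel_l in H2; [|apply Nat.pow_nonzero; lia].
  destruct H2 as [z Hz]. lia.
Qed.

Lemma b_le_w_div b w c : b <= w -> Nat.divide (2^b) (2^w*(2*c+1)).
Proof.
  intro H. replace w with (b + (w - b)) by lia. rewrite Nat.pow_add_r, <- Nat.mul_assoc.
  apply Nat.divide_factor_l.
Qed.

Lemma good_imp j m w c : 1 <= j -> 1 <= m -> 3^j * m - 1 = 2^w * (2*c+1) ->
  2*c+1 < 2^j * m - 1 -> bb j <= w.
Proof.
  intros Hj Hm Hw Hlt.
  assert (H1 : 2^w * (2*c+1) < 2^w * (2^j*m - 1)) by (apply Nat.mul_lt_mono_pos_l; [apply pow2_pos|auto]).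
  rewrite Nat.mul_sub_distr_r in H1 || rewrite Nat.mul_sub_distr_l in H1.
  pose proof (pow2_pos w) as P1w. pose proof (pow2_pos j) as P1j. pose proof (pow3_pos j) as P3j.
  assert (H4 : 3^j * m < (2^w * 2^j) * m) by nia.
  apply Nat.mul_lt_mono_pos_r in H4; [|lia].
  rewrite <- Nat.pow_add_r in H4.
  pose proof (E_spec j) as [HE _].
  assert (H3 : E j < w + j) by (apply (Nat.pow_lt_mono_r_iff 2); lia).
  unfold bb. lia.
Qed.

Lemma good_suff j m w c : 1 <= j -> 2 ^ bb j <= m -> bb j <= w ->
  3^j * m - 1 = 2^w * (2*c+1) -> 2*c+1 < 2^j * m - 1.
Proof.
  intros Hj Hm Hbw Hw.
  pose proof (E_spec j) as [_ HE]. pose proof (E_ge j).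
  assert (HbJ : 2 ^ S (E j) = 2 ^ bb j * 2 ^ j) by (rewrite <- Nat.pow_add_r; f_equal; unfold bb; lia).
  assert (Hw2 : 2 ^ w = 2 ^ bb j * 2 ^ (w - bb j)) by (rewrite <- Nat.pow_add_r; f_equal; lia).
  pose proof (pow2_pos (bb j)). pose proof (pow2_pos (w - bb j)).
  assert (HJ : 2 <= 2 ^ j) by (replace j with (1 + (j-1)) by lia; rewrite Nat.pow_add_r; pose proof (pow2_pos (j-1)); simpl; lia).
  set (B := 2 ^ bb j) in *. set (Y := 2 ^ (w - bb j)) in *. set (J := 2 ^ j) in *. set (T := 3 ^ j) in *.
  rewrite Hw2 in Hw.
  assert (Hkey : T * m <= B * Y * (J * m - 1)).
  { assert (T * m <= B * J * m - m) by nia.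
    assert (B * J * m * (Y - 1) >= 2 * B * (Y - 1)) by nia.
    nia. }
  assert (Hf : B * Y * (2*c+1) < B * Y * (J * m - 1)) by nia.
  apply (Nat.mul_lt_mono_pos_l (B*Y)); [nia|exact Hf].
Qed.


Fixpoint nsum (f : nat -> nat) (n : nat) : nat :=
  match n with O => O | S n => nsum f n + f n end.

Lemma nsum_single f J i0 : (forall j, j <> i0 -> f j = 0) ->
  nsum f J = if Nat.ltb i0 J then f i0 else 0.
Proof.
  intro H. induction J as [|J IH]; simpl; [destruct i0; reflexivity|].
  rewrite IH. destruct (Nat.eq_dec J i0) as [->|Hne].
  - rewrite (proj2 (Nat.ltb_ge i0 i0)), (proj2 (Nat.ltb_lt i0 (S i0))) by lia. lia.
  - rewrite (H J Hne). destruct (Nat.ltb i0 J) eqn:E1; destruct (Nat.ltb i0 (S J)) eqn:E2;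
    rewrite ?Nat.ltb_lt, ?Nat.ltb_ge in *; lia.
Qed.

Lemma nsum_ge f J i : i < J -> f i <= nsum f J.
Proof. induction J as [|J IH]; intro H; simpl; [lia|].
  destruct (Nat.eq_dec i J) as [->|]; [lia|]. specialize (IH ltac:(lia)). lia. Qed.

Lemma nsum_le f g J : (forall j, f j <= g j) -> nsum f J <= nsum g J.
Proof. intro H. induction J; simpl; [lia|]. specialize (H J). lia. Qed.

Lemma nsum_add f g J : nsum (fun j => f j + g j) J = nsum f J + nsum g J.
Proof. induction J; simpl; lia. Qed.

Lemma nsum_swap (f : nat -> nat -> nat) J N :
  nsum (fun k => nsum (fun j => f j k) J) N = nsum (fun j => nsum (fun k => f j k) N) J.
Proof.
  induction N as [|N IH]; simpl.
  - induction J; simpl; lia.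
  - rewrite IH. rewrite <- nsum_add. reflexivity.
Qed.


Lemma classify k : exists i d w c, k + 1 = 2^i * (2*d+1) /\
   3^(S i) * (2*d+1) - 1 = 2^w * (2*c+1) /\ good (2*k+1) = Nat.ltb (2*c+1) (2*k+1).
Proof.
  destruct (decomp (k+1) ltac:(lia)) as [i [d Hk]].
  pose proof (pow3_pos (S i)).
  destruct (decomp (3^(S i) * (2*d+1) - 1)) as [w [c Hw]].
  { rewrite Nat.pow_succ_r'. pose proof (pow3_pos i). nia. }
  exists i, d, w, c. split; [auto|split; [auto|]]. eapply good_char; eauto.
Qed.

Lemma sumE_eq k J i d : k + 1 = 2^i * (2*d+1) ->
  nsum (fun j' => Nat.b2n (Ej (S j') k)) J = if Nat.ltb i J then Nat.b2n (Ej (S i) k) else 0.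
Proof.
  intro Hk. apply (nsum_single (fun j' => Nat.b2n (Ej (S j') k))).
  intros j Hj. destruct (Ej (S j) k) eqn:He; [|reflexivity].
  exfalso. apply (Ej_char (S j) k i d ltac:(lia) Hk) in He. lia.
Qed.

Lemma pointU k J : Nat.b2n (good (2*k+1)) <=
   nsum (fun j' => Nat.b2n (Ej (S j') k)) J + Nat.b2n (Nat.eqb (k mod 2^J) (2^J - 1)).
Proof.
  destruct (classify k) as [i [d [w [c [Hk [Hw Hg]]]]]].
  rewrite (sumE_eq k J i d Hk), Hg.
  destruct (Nat.ltb (2*c+1) (2*k+1)) eqn:Hlt; [|simpl; lia].
  apply Nat.ltb_lt in Hlt.
  assert (Hbw : bb (S i) <= w).
  { apply (good_imp (S i) (2*d+1) w c); try lia; auto. rewrite Nat.pow_succ_r'. lia. }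
  assert (HE : Ej (S i) k = true).
  { apply (Ej_char (S i) k i d ltac:(lia) Hk). split; [lia|]. rewrite Hw. apply b_le_w_div; auto. }
  destruct (Nat.ltb i J) eqn:HiJ.
  - rewrite HE. simpl. lia.
  - apply Nat.ltb_ge in HiJ.
    assert (Hm : k mod 2^J = 2^J - 1).
    { symmetry. apply (Nat.mod_unique _ _ (2^(i-J)*(2*d+1) - 1)).
      pose proof (pow2_pos J); lia.
      assert (Hs : 2^i = 2^J * 2^(i-J)) by (rewrite <- Nat.pow_add_r; f_equal; lia).
      rewrite Hs in Hk. pose proof (pow2_pos J). pose proof (pow2_pos (i-J)). nia. }
    rewrite Hm, Nat.eqb_refl. simpl. lia.
Qed.

Lemma pointL k J : nsum (fun j' => Nat.b2n (Ej (S j') k)) J <=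
   Nat.b2n (good (2*k+1)) + nsum (fun j' => Nat.b2n (Nat.ltb (k+1) (2 ^ E (S j')))) J.
Proof.
  destruct (classify k) as [i [d [w [c [Hk [Hw Hg]]]]]].
  rewrite (sumE_eq k J i d Hk), Hg.
  destruct (Nat.ltb i J) eqn:HiJ; [|lia].
  apply Nat.ltb_lt in HiJ.
  destruct (Ej (S i) k) eqn:HE; [|simpl; lia].
  apply (Ej_char (S i) k i d ltac:(lia) Hk) in HE. destruct HE as [_ Hdiv].
  rewrite Hw in Hdiv. apply w_ge_b in Hdiv.
  destruct (Nat.ltb (k+1) (2 ^ E (S i))) eqn:Hsm.
  - pose proof (nsum_ge (fun j' => Nat.b2n (Nat.ltb (k+1) (2 ^ E (S j')))) J i HiJ). simpl in *.
    rewrite Hsm in H. simpl in *. lia.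
  - apply Nat.ltb_ge in Hsm. rewrite E_split in Hsm by lia. replace (S i - 1) with i in Hsm by lia.
    rewrite Hk in Hsm. apply Nat.mul_le_mono_pos_l in Hsm; [|apply pow2_pos].
    assert (Hlt : 2*c+1 < 2^(S i) * (2*d+1) - 1) by (eapply good_suff; eauto; lia).
    rewrite Nat.pow_succ_r' in Hlt.
    assert (Hlt2 : 2*c+1 < 2*k+1) by lia.
    apply Nat.ltb_lt in Hlt2. rewrite Hlt2. simpl. lia.
Qed.


Lemma len_filter_nsum p N : length (filter p (seq 0 N)) = nsum (fun k => Nat.b2n (p k)) N.
Proof.
  induction N as [|N IH]; [reflexivity|].
  rewrite seq_S, filter_app, length_app, IH. simpl. destruct (p N); simpl; lia.
Qed.

Lemma cnt_mod q s N : 0 < q -> s < q ->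
  nsum (fun k => Nat.b2n (Nat.eqb (k mod q) s)) N = N / q + Nat.b2n (Nat.ltb s (N mod q)).
Proof.
  intros Hq Hs. induction N as [|N IH].
  - simpl. rewrite Nat.Div0.div_0_l, Nat.Div0.mod_0_l. simpl. destruct s; reflexivity.
  - simpl nsum. rewrite IH.
    pose proof (Nat.div_mod N q ltac:(lia)) as Hdm. pose proof (Nat.mod_upper_bound N q ltac:(lia)) as Hub.
    set (a := N / q) in *. set (r := N mod q) in *.
    destruct (Nat.eq_dec r (q-1)) as [Hr|Hr].
    + assert (H1 : S N / q = a + 1) by (symmetry; apply (Nat.div_unique _ _ _ 0); lia).
      assert (H2 : S N mod q = 0) by (symmetry; apply (Nat.mod_unique _ _ (a+1)); lia).
      rewrite H1, H2. rewrite Hr.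
      destruct (Nat.eqb (q-1) s) eqn:E1; destruct (Nat.ltb s (q-1)) eqn:E2;
      rewrite ?Nat.eqb_eq, ?Nat.eqb_neq, ?Nat.ltb_lt, ?Nat.ltb_ge in *; simpl; lia.
    + assert (H1 : S N / q = a) by (symmetry; apply (Nat.div_unique _ _ _ (r+1)); lia).
      assert (H2 : S N mod q = r + 1) by (symmetry; apply (Nat.mod_unique _ _ a); lia).
      rewrite H1, H2.
      destruct (Nat.eqb r s) eqn:E1; destruct (Nat.ltb s r) eqn:E2; destruct (Nat.ltb s (r+1)) eqn:E3;
      rewrite ?Nat.eqb_eq, ?Nat.eqb_neq, ?Nat.ltb_lt, ?Nat.ltb_ge in *; simpl; lia.
Qed.

Lemma nsum_b2n_le (p : nat -> bool) N : nsum (fun k => Nat.b2n (p k)) N <= N.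
Proof. induction N; simpl; [lia|]. destruct (p N); simpl; lia. Qed.

Lemma nsum_lt Q N : nsum (fun k => Nat.b2n (Nat.ltb (k+1) Q)) N <= Q.
Proof.
  induction N as [|N IH]; simpl; [lia|].
  destruct (Nat.ltb (N+1) Q) eqn:E1; simpl.
  - apply Nat.ltb_lt in E1. pose proof (nsum_b2n_le (fun k => Nat.ltb (k+1) Q) N). simpl in H. lia.
  - lia.
Qed.

Definition cE (j N : nat) : nat := nsum (fun k => Nat.b2n (Ej j k)) N.

Lemma cE_eq j N : 1 <= j -> cE j N = N / 2 ^ E j + Nat.b2n (Nat.ltb (sig j) (N mod 2 ^ E j)).
Proof. intro Hj. unfold cE, Ej. apply cnt_mod. apply pow2_pos. apply sig_lt; auto. Qed.

Lemma count_nsum N : count_good N = nsum (fun k => Nat.b2n (good (2*k+1))) N.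
Proof. unfold count_good. apply len_filter_nsum. Qed.

Lemma SU J N : count_good N <= nsum (fun j' => cE (S j') N) J +
   nsum (fun k => Nat.b2n (Nat.eqb (k mod 2^J) (2^J - 1))) N.
Proof.
  rewrite count_nsum. unfold cE.
  rewrite <- (nsum_swap (fun j k => Nat.b2n (Ej (S j) k))).
  rewrite <- nsum_add. apply nsum_le. intro k. apply pointU.
Qed.

Lemma SL J N : nsum (fun j' => cE (S j') N) J <= count_good N + nsum (fun j' => 2 ^ E (S j')) J.
Proof.
  rewrite count_nsum. unfold cE.
  rewrite <- (nsum_swap (fun j k => Nat.b2n (Ej (S j) k))).
  eapply Nat.le_trans.
  - apply nsum_le. intro k. apply (pointL k J).
  - rewrite nsum_add. apply Nat.add_le_mono_l.
    rewrite (nsum_swap (fun j k => Nat.b2n (Nat.ltb (k+1) (2 ^ E (S j))))).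
    apply nsum_le. intro j. apply nsum_lt.
Qed.

Open Scope R_scope.

Definition tt (l : nat) : R := / 2 ^ (E (S l)).

Lemma INR_pow2 e : INR (2 ^ e) = 2 ^ e.
Proof. rewrite pow_INR. reflexivity. Qed.
Lemma INR_pow3 e : INR (3 ^ e) = 3 ^ e.
Proof. rewrite pow_INR. simpl INR. f_equal. lra. Qed.

Lemma E_R j : 2 ^ E j <= 3 ^ j < 2 ^ S (E j).
Proof.
  pose proof (E_spec j) as [H1 H2]. rewrite <- INR_pow2, <- INR_pow3, <- INR_pow2.
  split; [apply le_INR|apply lt_INR]; auto.
Qed.

Lemma ln2_pos : 0 < ln 2.
Proof. pose proof ln_lt_2. lra. Qed.

Lemma Int_part_E j : Int_part ((log2_3 - 1) * INR j) = (Z.of_nat (E j) - Z.of_nat j)%Z.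
Proof.
  pose proof (E_R j) as [H1 H2].
  assert (L1 : INR (E j) * ln 2 <= INR j * ln 3).
  { rewrite <- !ln_pow by lra. destruct (Rle_lt_or_eq_dec _ _ H1) as [H|H].
    - left. apply ln_increasing; auto. apply pow_lt; lra.
    - rewrite H. lra. }
  assert (L2 : INR j * ln 3 < INR (S (E j)) * ln 2).
  { rewrite <- !ln_pow by lra. apply ln_increasing; auto. apply pow_lt; lra. }
  rewrite S_INR in L2.
  pose proof ln2_pos as Hl.
  set (x := (log2_3 - 1) * INR j).
  assert (Hx1 : INR (E j) - INR j <= x).
  { unfold x, log2_3. apply Rmult_le_reg_r with (ln 2); auto.
    replace ((ln 3 / ln 2 - 1) * INR j * ln 2) with (INR j * ln 3 - INR j * ln 2) by (field; lra). lra. }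
  assert (Hx2 : x < INR (E j) - INR j + 1).
  { unfold x, log2_3. apply Rmult_lt_reg_r with (ln 2); auto.
    replace ((ln 3 / ln 2 - 1) * INR j * ln 2) with (INR j * ln 3 - INR j * ln 2) by (field; lra). lra. }
  unfold Int_part. fold x.
  assert (Hu : (Z.of_nat (E j) - Z.of_nat j + 1)%Z = up x).
  { apply tech_up; rewrite plus_IZR, minus_IZR, <- !INR_IZR_INZ; simpl; lra. }
  rewrite <- Hu. ring.
Qed.

Lemma P1cyc_eq l : P1cyc_term l = tt l.
Proof.
  unfold P1cyc_term, tt. rewrite Nat.add_1_r. rewrite Int_part_E.
  pose proof (E_ge (S l)) as Hge.
  replace (- (Z.of_nat (E (S l)) - Z.of_nat (S l)))%Z with (- Z.of_nat (E (S l) - S l))%Z by lia.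
  rewrite powerRZ_neg', <- pow_powerRZ, pow_inv, <- Rinv_mult, <- pow_add.
  f_equal. f_equal. lia.
Qed.


Fixpoint rsum (f : nat -> R) (n : nat) : R :=
  match n with O => 0 | S n => rsum f n + f n end.

Lemma rsum_S f n : rsum f (S n) = rsum f n + f n.
Proof. reflexivity. Qed.

Lemma sum_rsum f n : sum_f_R0 f n = rsum f (S n).
Proof. induction n; simpl in *; [lra|]. rewrite IHn. reflexivity. Qed.

Lemma tt_pos l : 0 < tt l.
Proof. unfold tt. apply Rinv_0_lt_compat, pow_lt. lra. Qed.

Lemma tt_bound l : tt l <= (/3) ^ l - (/3) ^ (S l).
Proof.
  unfold tt. pose proof (E_R (S l)) as [_ H].
  change (3 ^ S l) with (3 * 3 ^ l) in H.
  assert (H3 : 0 < 3 ^ l) by (apply pow_lt; lra).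
  replace ((/3) ^ l - (/3) ^ S l) with (2 * / 3 ^ S l) by (rewrite !pow_inv; simpl; field; lra).
  change (3 ^ S l) with (3 * 3 ^ l).
  apply Rlt_le. 
  replace (2 * / (3 * 3 ^ l)) with (/ ((3 * 3^l) / 2)) by (field; lra).
  apply Rinv_lt_contravar. apply Rmult_lt_0_compat. lra. apply pow_lt; lra.
  change (2 ^ S (E (S l))) with (2 * 2 ^ (E (S l))) in H. lra.
Qed.

Lemma rsum_tail K n : rsum tt (K + n) <= rsum tt K + (/3)^K - (/3)^(K+n).
Proof.
  induction n as [|n IH].
  - rewrite Nat.add_0_r. lra.
  - rewrite Nat.add_succ_r, rsum_S. pose proof (tt_bound (K+n)). lra.
Qed.

Lemma rsum_mono n m : (n <= m)%nat -> rsum tt n <= rsum tt m.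
Proof.
  intro H. induction H; [lra|]. rewrite rsum_S. pose proof (tt_pos m). lra.
Qed.

Lemma rsum_le1 n : rsum tt n <= 1.
Proof. pose proof (rsum_tail 0 n). simpl in H. pose proof (pow_lt (/3) n ltac:(lra)). lra. Qed.

Lemma lim_le (U : nat -> R) l M : Un_cv U l -> (forall n, U n <= M) -> l <= M.
Proof.
  intros Hc HU. destruct (Rle_or_lt l M) as [|H]; auto. exfalso.
  destruct (Hc (l - M) ltac:(lra)) as [N HN]. specialize (HN N (le_n N)). specialize (HU N).
  unfold R_dist in HN. apply Rabs_def2 in HN. lra.
Qed.

Lemma log2_3pow j e : (2 ^ N.of_nat e <= 3 ^ N.of_nat j < 2 ^ (N.of_nat e + 1))%N -> E j = e.
Proof. intros [H1 H2]. apply Nat.log2_unique. lia.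
 assert (A: forall a b, (N.of_nat a <= N.of_nat b)%N -> (a <= b)%nat) by lia.
 assert (B: forall a b, (N.of_nat a < N.of_nat b)%N -> (a < b)%nat) by lia.
 split.
 apply A. rewrite !Nat2N.inj_pow. exact H1.
 apply B. rewrite !Nat2N.inj_pow. replace (N.of_nat (S e)) with (N.of_nat e + 1)%N by lia. exact H2. Qed.

Ltac Ev j e := assert (E j = e) by (apply log2_3pow; vm_compute; split; congruence).

Lemma S33_val : 71372549767589 / 100000000000000 <= rsum tt 33 /\
   rsum tt 33 + (/3)^33 < 71372549767590 / 100000000000000.
Proof.
  Ev 1%nat 1%nat. Ev 2%nat 3%nat. Ev 3%nat 4%nat. Ev 4%nat 6%nat. Ev 5%nat 7%nat. Ev 6%nat 9%nat.
  Ev 7%nat 11%nat. Ev 8%nat 12%nat. Ev 9%nat 14%nat. Ev 10%nat 15%nat. Ev 11%nat 17%nat.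
  Ev 12%nat 19%nat. Ev 13%nat 20%nat. Ev 14%nat 22%nat. Ev 15%nat 23%nat. Ev 16%nat 25%nat.
  Ev 17%nat 26%nat. Ev 18%nat 28%nat. Ev 19%nat 30%nat. Ev 20%nat 31%nat. Ev 21%nat 33%nat.
  Ev 22%nat 34%nat. Ev 23%nat 36%nat. Ev 24%nat 38%nat. Ev 25%nat 39%nat. Ev 26%nat 41%nat.
  Ev 27%nat 42%nat. Ev 28%nat 44%nat. Ev 29%nat 45%nat. Ev 30%nat 47%nat. Ev 31%nat 49%nat.
  Ev 32%nat 50%nat. Ev 33%nat 52%nat.
  rewrite !rsum_S. unfold rsum, tt.
  repeat match goal with H : E _ = _ |- _ => rewrite H; clear H end.
  split; lra.
Qed.


Lemma div_bounds N q : (0 < q)%nat ->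
  INR (N / q) <= INR N * / INR q /\ INR N * / INR q < INR (N / q) + 1.
Proof.
  intro Hq. pose proof (Nat.div_mod N q ltac:(lia)) as Hdm. pose proof (Nat.mod_upper_bound N q ltac:(lia)) as Hub.
  assert (HqR : 0 < INR q) by (apply lt_0_INR; lia).
  assert (HN : INR N = INR q * INR (N / q) + INR (N mod q)) by (rewrite Hdm at 1; rewrite plus_INR, mult_INR; reflexivity).
  assert (Hr : 0 <= INR (N mod q) < INR q) by (split; [apply pos_INR|apply lt_INR; lia]).
  rewrite HN. split.
  - apply Rmult_le_reg_r with (INR q); auto. field_simplify; [|lra]. lra.
  - apply Rmult_lt_reg_r with (INR q); auto. field_simplify; [|lra]. lra.
Qed.

Lemma cnt_bounds q s N : (0 < q)%nat -> (s < q)%nat ->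
  INR N * / INR q - 1 <= INR (nsum (fun k => Nat.b2n (Nat.eqb (k mod q) s)) N) <= INR N * / INR q + 1.
Proof.
  intros Hq Hs. rewrite cnt_mod by auto. rewrite plus_INR.
  pose proof (div_bounds N q Hq).
  assert (0 <= INR (Nat.b2n (Nat.ltb s (N mod q))) <= 1) by (destruct (Nat.ltb s (N mod q)); simpl; lra).
  lra.
Qed.

Lemma cE_bounds j N : (1 <= j)%nat ->
  INR N * / 2 ^ E j - 1 <= INR (cE j N) <= INR N * / 2 ^ E j + 1.
Proof.
  intro Hj. unfold cE, Ej. rewrite <- INR_pow2. apply cnt_bounds. apply pow2_pos. apply sig_lt; auto.
Qed.

Lemma sumE_bounds J N :
  INR N * rsum tt J - INR J <= INR (nsum (fun j' => cE (S j') N) J) <= INR N * rsum tt J + INR J.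
Proof.
  induction J as [|J IH]; simpl nsum; simpl rsum.
  - simpl. lra.
  - rewrite plus_INR, S_INR, Rmult_plus_distr_l. pose proof (cE_bounds (S J) N ltac:(lia)). change (tt J) with (/ 2 ^ E (S J)). lra.
Qed.

Definition CC (J : nat) : R := INR (nsum (fun j' => (2 ^ E (S j'))%nat) J).

Lemma dens_upper J N : (1 <= N)%nat ->
  dens N <= rsum tt J + (INR J + 1) * / INR N + / 2 ^ J.
Proof.
  intro HN. assert (HNR : 0 < INR N) by (apply lt_0_INR; lia).
  pose proof (SU J N) as H. apply le_INR in H. rewrite plus_INR in H.
  pose proof (sumE_bounds J N) as [_ H2].
  pose proof (cnt_bounds (2^J) (2^J - 1) N (pow2_pos J) ltac:(pose proof (pow2_pos J); lia)) as [_ H3].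
  rewrite INR_pow2 in H3.
  unfold dens. apply Rmult_le_reg_r with (INR N); auto.
  assert (Hp : 0 < 2 ^ J) by (apply pow_lt; lra).
  replace ((rsum tt J + (INR J + 1) * / INR N + / 2 ^ J) * INR N)
    with (INR N * rsum tt J + INR J + INR N * / 2 ^ J + 1) by (field; split; lra).
  unfold Rdiv. rewrite Rmult_assoc, Rinv_l, Rmult_1_r by lra. lra.
Qed.

Lemma dens_lower J N : (1 <= N)%nat ->
  rsum tt J - (INR J + CC J) * / INR N <= dens N.
Proof.
  intro HN. assert (HNR : 0 < INR N) by (apply lt_0_INR; lia).
  pose proof (SL J N) as H. apply le_INR in H. rewrite plus_INR in H. fold (CC J) in H.
  pose proof (sumE_bounds J N) as [H2 _].
  unfold dens. apply Rmult_le_reg_r with (INR N); auto.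
  replace ((rsum tt J - (INR J + CC J) * / INR N) * INR N)
    with (INR N * rsum tt J - INR J - CC J) by (field; lra).
  unfold Rdiv. rewrite Rmult_assoc, Rinv_l, Rmult_1_r by lra. lra.
Qed.

Lemma CC_nonneg J : 0 <= CC J.
Proof. unfold CC. apply pos_INR. Qed.

Theorem mainTheorem13 :
  exists P : R,
    infinite_sum P1cyc_term P /\
    Un_cv dens P /\
    71372549767589 / 100000000000000 <= P < 71372549767590 / 100000000000000.
Proof.
  assert (Hg : Un_growing (fun n => sum_f_R0 tt n)).
  { intro n. simpl. pose proof (tt_pos (S n)). lra. }
  assert (Hb : has_ub (fun n => sum_f_R0 tt n)).
  { exists 1. intros x [n ->]. rewrite sum_rsum. apply rsum_le1. }
  destruct (growing_cv _ Hg Hb) as [P HP].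
  exists P. split; [|split].
  - intros eps Heps. destruct (HP eps Heps) as [N HN]. exists N. intros n Hn.
    specialize (HN n Hn).
    assert (sum_f_R0 P1cyc_term n = sum_f_R0 tt n).
    { apply sum_eq. intros; apply P1cyc_eq. }
    rewrite H. exact HN.
  - intros eps Heps.
    destruct (HP (eps/4) ltac:(lra)) as [N1 HN1].
    destruct (pow_lt_1_zero (/2) ltac:(rewrite Rabs_pos_eq; lra) (eps/4) ltac:(lra)) as [N2 HN2].
    set (J := S (N1 + N2)).
    assert (HJ1 : Rabs (rsum tt J - P) < eps/4).
    { specialize (HN1 (N1 + N2)%nat ltac:(lia)). unfold R_dist in HN1. rewrite sum_rsum in HN1. exact HN1. }
    assert (HJ2 : / 2 ^ J < eps/4).
    { specialize (HN2 J ltac:(unfold J; lia)). rewrite pow_inv in HN2.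
      rewrite Rabs_pos_eq in HN2; auto. left. apply Rinv_0_lt_compat, pow_lt; lra. }
    set (A := INR J + 1 + CC J).
    assert (HA : 0 < A) by (unfold A; pose proof (pos_INR J); pose proof (CC_nonneg J); lra).
    destruct (archimed_cor1 (eps / 4 / A) ltac:(apply Rdiv_lt_0_compat; lra)) as [N0 [HN0 HN0p]].
    exists N0. intros N HN.
    assert (HNR : 0 < INR N) by (apply lt_0_INR; lia).
    assert (HAN : A * / INR N < eps / 4).
    { assert (/ INR N <= / INR N0) by (apply Rinv_le_contravar; [apply lt_0_INR; lia|apply le_INR; lia]).
      assert (A * / INR N <= A * / INR N0) by (apply Rmult_le_compat_l; lra).
      assert (A * / INR N0 < A * (eps / 4 / A)) by (apply Rmult_lt_compat_l; lra).
      replace (A * (eps / 4 / A)) with (eps / 4) in H1 by (field; lra). lra. }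
    pose proof (dens_upper J N ltac:(lia)) as Hu.
    pose proof (dens_lower J N ltac:(lia)) as Hl.
    assert (Hx1 : (INR J + 1) * / INR N <= A * / INR N).
    { apply Rmult_le_compat_r. left; apply Rinv_0_lt_compat; auto. pose proof (CC_nonneg J). unfold A. lra. }
    assert (Hx2 : (INR J + CC J) * / INR N <= A * / INR N).
    { apply Rmult_le_compat_r. left; apply Rinv_0_lt_compat; auto. unfold A. lra. }
    apply Rabs_def2 in HJ1. unfold R_dist. apply Rabs_def1; lra.
  - pose proof (S33_val) as [H1 H2].
    split.
    + pose proof (growing_ineq _ _ Hg HP 32%nat). rewrite sum_rsum in H. lra.
    + assert (P <= rsum tt 33 + (/3)^33).
      { apply (lim_le _ _ _ HP). intro n. rewrite sum_rsum.
        destruct (le_lt_dec (S n) 33) as [Hn|Hn].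
        - pose proof (rsum_mono _ _ Hn). pose proof (pow_lt (/3) 33 ltac:(lra)). lra.
        - replace (S n) with (33 + (S n - 33))%nat by lia. pose proof (rsum_tail 33 (S n - 33)).
          pose proof (pow_lt (/3) (33 + (S n - 33)) ltac:(lra)). lra. }
      lra.
Qed.
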